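(* Let $H$ be the 28-element set $H=\{n_M : n\in\mathbb{Z}_{12}\}\cup\{n_m : n\in\mathbb{Z}_{12}\}\cup\{n_{\mathrm{aug}} : n\in\{0,1,2,3\}\}$, and let $\mathcal{T}$ be the symmetric relation on $H$ consisting exactly of the pairs $(n_M,(n+4)_M)$, $(n_M,(n+8)_M)$, $(n_M,(n+1)_m)$, $(n_M,(n+5)_m)$, $(n_M,((n+3)\bmod 4)_{\mathrm{aug}})$, $(n_m,(n+4)_m)$, $(n_m,(n+8)_m)$, $(n_m,(n+11)_M)$, $(n_m,(n+7)_M)$, $(n_m,(n\bmod 4)_{\mathrm{aug}})$ for $n\in\mathbb{Z}_{12}$, together with the reverses of all these pairs. Then the monoid $M_{\mathcal{T}}$ of relations on $H$ generated by $\mathcal{T}$ under composition of relations has the presentation $M_{\mathcal{T}}=\langle \mathcal{T}\mid \mathcal{T}^4=\mathcal{T}^3\rangle$.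
   Context: Indices $n$ of $n_M,n_m$ are taken modulo 12; the elements of $H$ are formal labels (musically: $n_M=\{n,n+4,n+7\}$, $n_m=\{n,n+3,n+7\}$, $k_{\mathrm{aug}}=\{k,k+4,k+8\}$ in $\mathbb{Z}_{12}$; $\mathcal{T}$ is Douthett's relation $\mathcal{P}_{2,0}$). Composition of relations: $\mathcal{R}'\mathcal{R}$ is the set of pairs $(x,z)$ such that there exists $y$ with $(x,y)\in\mathcal{R}$ and $(y,z)\in\mathcal{R}'$; the monoid identity is the identity relation on $H$. *)

(* Defs.v *)
From mathcomp Require Import all_boot.
Set Implicit Arguments. Unset Strict Implicit. Unset Printing Implicit Defensive.

Definition H : finType := ('I_12 + 'I_12 + 'I_4)%type.
Definition Maj (n : 'I_12) : H := inl (inl n).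
Definition Min (n : 'I_12) : H := inl (inr n).
Definition Aug (k : 'I_4) : H := inr k.

Definition sh12 (n : 'I_12) (k : nat) : 'I_12 := inord ((n + k) %% 12).
Definition md4 (n : 'I_12) (k : nat) : 'I_4 := inord ((n + k) %% 4).

Definition Tgen (x y : H) : bool :=
  [exists n : 'I_12,
     ((x == Maj n) &&
        [|| y == Maj (sh12 n 4), y == Maj (sh12 n 8), y == Min (sh12 n 1),
            y == Min (sh12 n 5) | y == Aug (md4 n 3)])
  || ((x == Min n) &&
        [|| y == Min (sh12 n 4), y == Min (sh12 n 8), y == Maj (sh12 n 11),
            y == Maj (sh12 n 7) | y == Aug (md4 n 0)])].

Definition T : {set H * H} := [set p | Tgen p.1 p.2 || Tgen p.2 p.1].

Definition relid : {set H * H} := [set p | p.1 == p.2].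

Definition relcomp (R' R : {set H * H}) : {set H * H} :=
  [set p | [exists y : H, ((p.1, y) \in R) && ((y, p.2) \in R')]].

Definition relpow (R : {set H * H}) (n : nat) : {set H * H} :=
  iter n (relcomp R) relid.

(* Main.v *)
Require Import Defs.
From mathcomp Require Import all_boot.
From mathcomp Require Import zify.

Definition code (x : H) : nat :=
  match x with
  | inl (inl n) => nat_of_ord n
  | inl (inr n) => 12 + nat_of_ord n
  | inr k => 24 + nat_of_ord k
  end.

Lemma code_lt x : code x < 28.
Proof. by case: x => [[n|n]|n] /=; have := ltn_ord n; rewrite /=; lia. Qed.

Lemma code_inj : injective code.
Proof.
move=> [[a|a]|a] [[b|b]|b] /= h;
  (try (have := ltn_ord a; have := ltn_ord b; lia));
  by congr (_ _); try congr (_ _); apply: val_inj => /=; lia.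
Qed.

Lemma code_eq x y : (x == y) = (code x == code y).
Proof. by apply/eqP/eqP => [->//|/code_inj]. Qed.

Definition decode (k : nat) : H :=
  if k < 12 then Maj (inord k) else if k < 24 then Min (inord (k - 12))
  else Aug (inord (k - 24)).

Lemma code_decode k : k < 28 -> code (decode k) = k.
Proof.
move=> hk; rewrite /decode.
case: ifP => h1 /=; first by rewrite inordK.
case: ifP => h2 /=; first by rewrite inordK; lia.
by rewrite inordK; lia.
Qed.

Definition TgenN (a b : nat) : bool :=
  if a < 12 then
    [|| b == (a + 4) %% 12, b == (a + 8) %% 12, b == 12 + (a + 1) %% 12,
        b == 12 + (a + 5) %% 12 | b == 24 + (a + 3) %% 4]
  else if a < 24 then
    [|| b == 12 + (a - 12 + 4) %% 12, b == 12 + (a - 12 + 8) %% 12,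
        b == (a - 12 + 11) %% 12, b == (a - 12 + 7) %% 12 | b == 24 + (a - 12) %% 4]
  else false.

Lemma code_sh12 n k : nat_of_ord (sh12 n k) = (n + k) %% 12.
Proof. by rewrite /sh12 inordK // ltn_pmod. Qed.
Lemma code_md4 n k : nat_of_ord (md4 n k) = (n + k) %% 4.
Proof. by rewrite /md4 inordK // ltn_pmod. Qed.

Lemma Tgen_code x y : Tgen x y = TgenN (code x) (code y).
Proof.
rewrite /Tgen /TgenN.
case: x => [[a|a]|a].
- have ha := ltn_ord a. rewrite /= ha.
  apply/existsP/idP.
  + move=> [n]; case/orP => // /andP [e h].
    move/eqP: e => [] e; subst n.
    by move: h; rewrite !code_eq /= !code_sh12 !code_md4.
  + move=> h; exists a; apply/orP; left; rewrite eqxx /=; move: h.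
    by rewrite !code_eq /= !code_sh12 !code_md4.
- have ha := ltn_ord a.
  have -> : (12 + a < 12) = false by lia.
  have -> : (12 + a < 24) = true by lia.
  have -> : 12 + a - 12 = a by lia.
  apply/existsP/idP.
  + move=> [n]; case/orP => /andP [e h]; move/eqP: e => // [] e; subst n.
    by move: h; rewrite !code_eq /= !code_sh12 !code_md4 addn0.
  + move=> h; exists a; apply/orP; right; rewrite eqxx /=; move: h.
    by rewrite !code_eq /= !code_sh12 !code_md4 addn0.
- have -> : (24 + a < 12) = false by lia.
  have -> : (24 + a < 24) = false by lia.
  by apply/existsP => [[n]]; case/orP => /andP [].
Qed.

Definition N := 28.
Definition mk (f : nat -> nat -> bool) : seq (seq bool) :=
  [seq [seq f i j | j <- iota 0 N] | i <- iota 0 N].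
Definition getm (M : seq (seq bool)) i j := nth false (nth [::] M i) j.

Lemma getm_mk f i j : i < N -> j < N -> getm (mk f) i j = f i j.
Proof.
move=> hi hj; rewrite /getm /mk (nth_map 0) ?size_iota // nth_iota //.
by rewrite (nth_map 0) ?size_iota // nth_iota.
Qed.

Definition Tm := mk (fun i j => TgenN i j || TgenN j i).
Definition step (M : seq (seq bool)) :=
  mk (fun i k => has (fun j => getm M i j && getm Tm j k) (iota 0 N)).
Definition Mp (n : nat) := iter n step (mk (fun i j => i == j)).

Lemma T_code y z : ((y, z) \in T) = getm Tm (code y) (code z).
Proof. by rewrite inE /= getm_mk ?code_lt // !Tgen_code. Qed.

Lemma corr n x z : ((x, z) \in relpow T n) = getm (Mp n) (code x) (code z).
Proof.
elim: n x z => [|n IH] x z.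
  by rewrite /relpow /= /relid inE /= getm_mk ?code_lt // code_eq.
rewrite /relpow /= -/(relpow T n) /relcomp inE /= getm_mk ?code_lt //.
apply/existsP/hasP.
- move=> [y /andP [h1 h2]]; exists (code y).
    by rewrite mem_iota /= code_lt.
  by rewrite -IH -T_code h1 h2.
- move=> [j]; rewrite mem_iota /= => hj /andP [h1 h2].
  exists (decode j); rewrite IH T_code code_decode //.
  by rewrite h1 h2.
Qed.

Lemma mk_getm f : mk f = mk (getm (mk f)).
Proof.
have hg i j : i < N -> j < N -> getm (mk f) i j = f i j by exact: getm_mk.
move: hg; set g := getm (mk f) => hg.
rewrite /mk; apply/eq_in_map => i; rewrite mem_iota => /andP [_ hi].
by apply/eq_in_map => j; rewrite mem_iota => /andP [_ hj]; rewrite hg.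
Qed.

Lemma Mp_mk n : Mp n = mk (getm (Mp n)).
Proof. by case: n => [|n]; rewrite /Mp /= ?/step; apply: mk_getm. Qed.

Lemma relpow_Mp i j : relpow T i = relpow T j <-> Mp i = Mp j.
Proof.
split => h.
- rewrite (Mp_mk i) (Mp_mk j) /mk; apply/eq_in_map => a; rewrite mem_iota => /andP [_ ha];
  apply/eq_in_map => b; rewrite mem_iota => /andP [_ hb].
  by rewrite -(code_decode a ha) -(code_decode b hb) -!corr h.
- by apply/setP => [[x z]]; rewrite !corr h.
Qed.

Lemma M43 : Mp 4 = Mp 3.
Proof. apply/eqP; vm_compute; reflexivity. Qed.

Lemma Mp_ge3 n : Mp (n + 3) = Mp 3.
Proof.
elim: n => [//|n IH].
by rewrite addSn /Mp iterS -/(Mp (n + 3)) IH -M43.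
Qed.

Lemma Mp_min n : Mp n = Mp (minn n 3).
Proof.
case: (leqP 3 n) => h.
  by rewrite -(subnK h) Mp_ge3.
by [].
Qed.

Lemma Mdist_b : all (fun a => all (fun b => (a == b) || (Mp a != Mp b)) (iota 0 4)) (iota 0 4).
Proof. vm_compute; reflexivity. Qed.

Lemma Mdist a b : a < 4 -> b < 4 -> Mp a = Mp b -> a = b.
Proof.
move=> ha hb h.
have H1 := allP Mdist_b a.
have : a \in iota 0 4 by rewrite mem_iota.
move/H1 => H2.
have : b \in iota 0 4 by rewrite mem_iota.
move/(allP H2); case/orP; first by move/eqP.
by rewrite h eqxx.
Qed.

Theorem mainTheorem3 :
  forall i j : nat, relpow T i = relpow T j <-> (i = j \/ (3 <= i /\ 3 <= j)).
Proof.
move=> i j; rewrite relpow_Mp; split.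
- rewrite (Mp_min i) (Mp_min j) => /Mdist h.
  have := h ltac:(lia) ltac:(lia); lia.
- case=> [->//|[hi hj]].
  rewrite (Mp_min i) (Mp_min j).
  have -> : minn i 3 = 3 by lia.
  by have -> : minn j 3 = 3 by lia.
Qed.
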